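(* For every $n\ge 1$, every labeled and every unlabeled tabletop rearrangement instance with $n$ objects has $\mathrm{MRB}\le n-1$; and for every $n\ge1$ there exists an instance whose $n$ objects are congruent convex objects (thin rectangles) such that its unlabeled $\mathrm{MRB}$, as well as its labeled $\mathrm{MRB}$ under any assignment of labels, equals $n-1$.
   Context: A tabletop rearrangement instance consists of $n$ objects (generalized cylinders of equal height; only planar footprints matter) in a bounded planar workspace, a feasible start arrangement and a feasible goal arrangement of poses in $SE(2)$; an arrangement is feasible if no two placed footprints overlap (have intersecting interiors). In the labeled setting each object $o_i$ must end at its own goal pose $x_i^g$; in the unlabeled setting objects are congruent and interchangeable and must end occupying all goal poses. A plan with external buffers is a sequence of pick-and-place operations in which each object is picked from its start pose exactly once and either placed directly at a goal pose (its own goal in the labeled setting, any unoccupied goal pose in the unlabeled setting), or placed into an external buffer (outside the workspace, unlimited capacity) and later moved from the buffer to such a goal pose; an object may be placed at a goal pose only if it does not overlap any object currently in the workspace; at the end every object is at a goal pose as required. The number of running buffers at a moment is the number of objects stored in buffers; $\mathrm{MRB}$ is the minimum over plans of the maximum number of running buffers during the plan. *)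

(* Defs.v *)
From HB Require Import structures.
From mathcomp Require Import all_boot all_order all_algebra.
From mathcomp Require Import fingroup perm.
From mathcomp Require Import boolp classical_sets reals topology normedtype trigo.
Set Implicit Arguments. Unset Strict Implicit. Unset Printing Implicit Defensive.
Import Order.TTheory GRing.Theory Num.Theory.
Import numFieldNormedType.Exports.
Local Open Scope ring_scope.
Local Open Scope classical_set_scope.

Section Rearr.
Variable R : realType.

Record pose := Pose { theta : R; tx : R; ty : R }.

Definition act (p : pose) (v : R * R) : R * R :=
  (cos (theta p) * v.1 - sin (theta p) * v.2 + tx p,
   sin (theta p) * v.1 + cos (theta p) * v.2 + ty p).

Definition place (F : set (R * R)) (p : pose) : set (R * R) := act p @` F.

Definition overlap (A B : set (R * R)) : Prop :=
  exists x, interior A x /\ interior B x.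

Definition bounded_ws (W : set (R * R)) : Prop :=
  exists M : R, forall v, W v -> `|v.1| <= M /\ `|v.2| <= M.

Definition feasible n (W : set (R * R)) (fp : 'I_n -> set (R * R))
  (x : 'I_n -> pose) : Prop :=
  (forall i, place (fp i) (x i) `<=` W) /\
  (forall i j, i != j -> ~ overlap (place (fp i) (x i)) (place (fp j) (x j))).

Definition labeled_instance n (W : set (R * R)) (fp : 'I_n -> set (R * R))
  (xs xg : 'I_n -> pose) : Prop :=
  bounded_ws W /\ feasible W fp xs /\ feasible W fp xg.

Definition unlabeled_instance n (W : set (R * R)) (F : set (R * R))
  (xs xg : 'I_n -> pose) : Prop :=
  bounded_ws W /\ feasible W (fun _ => F) xs /\ feasible W (fun _ => F) xg.

Inductive loc n := AtStart | InBuf | AtGoal of 'I_n.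
Arguments AtStart {n}. Arguments InBuf {n}.

Definition isbuf n (l : loc n) : bool := if l is InBuf then true else false.

(** Pick-and-place actions: [ToBuf i] picks object i from its start pose and
    puts it into the external buffer; [Place i j] picks object i (from its
    start pose or from the buffer) and places it at goal pose number j. *)
Inductive action n := ToBuf of 'I_n | Place of 'I_n & 'I_n.

Definition state n := 'I_n -> loc n.

Definition nbuf n (s : state n) : nat := #|[pred i | isbuf (s i)]|.

Definition upd n (s : state n) (i : 'I_n) (l : loc n) : state n :=
  fun k => if k == i then l else s k.

(** [allowed i j]: object i may be placed at goal j (labeled: j = its own goal;
    unlabeled: any goal). *)
Definition valid_step n (fp : 'I_n -> set (R * R)) (xs xg : 'I_n -> pose)
  (allowed : 'I_n -> 'I_n -> bool) (s : state n) (a : action n) : Prop :=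
  match a with
  | ToBuf i => s i = AtStart
  | Place i j =>
      (s i = AtStart \/ s i = InBuf) /\ allowed i j /\
      (forall k, s k <> AtGoal j) /\
      (forall k, k != i -> s k = AtStart ->
         ~ overlap (place (fp i) (xg j)) (place (fp k) (xs k))) /\
      (forall k j', k != i -> s k = AtGoal j' ->
         ~ overlap (place (fp i) (xg j)) (place (fp k) (xg j')))
  end.

Definition next n (s : state n) (a : action n) : state n :=
  match a with
  | ToBuf i => upd s i InBuf
  | Place i j => upd s i (AtGoal j)
  end.

Fixpoint exec n (fp : 'I_n -> set (R * R)) (xs xg : 'I_n -> pose)
  (allowed : 'I_n -> 'I_n -> bool) (s : state n) (p : seq (action n)) (k : nat)
  : Prop :=
  match p with
  | [::] => (forall i, exists j, s i = AtGoal j) /\ (nbuf s <= k)%N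
  | a :: p' => (nbuf s <= k)%N /\ valid_step fp xs xg allowed s a /\
               exec fp xs xg allowed (next s a) p' k
  end.

Definition init_state n : state n := fun _ => AtStart.

Definition labeled_MRB_le n (fp : 'I_n -> set (R * R)) (xs xg : 'I_n -> pose)
  (k : nat) : Prop :=
  exists p, exec fp xs xg (fun i j => j == i) (@init_state n) p k.

Definition unlabeled_MRB_le n (F : set (R * R)) (xs xg : 'I_n -> pose)
  (k : nat) : Prop :=
  exists p, exec (fun _ => F) xs xg (fun _ _ => true) (@init_state n) p k.

Definition labeled_MRB_eq n fp (xs xg : 'I_n -> pose) (k : nat) : Prop :=
  labeled_MRB_le fp xs xg k /\
  forall k', labeled_MRB_le fp xs xg k' -> (k <= k')%N.

Definition unlabeled_MRB_eq n F (xs xg : 'I_n -> pose) (k : nat) : Prop :=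
  unlabeled_MRB_le F xs xg k /\
  forall k', unlabeled_MRB_le F xs xg k' -> (k <= k')%N.

Definition rect (a b : R) : set (R * R) :=
  [set v | `|v.1| <= a / 2 /\ `|v.2| <= b / 2].

End Rearr.

(* Main.v *)
Require Import Defs.
From HB Require Import structures.
From mathcomp Require Import all_boot all_order all_algebra.
From mathcomp Require Import fingroup perm.
From mathcomp Require Import boolp classical_sets reals topology normedtype trigo.
From mathcomp Require Import lra.
Import Order.TTheory GRing.Theory Num.Theory.
Import numFieldNormedType.Exports.
Local Open Scope ring_scope.
Local Open Scope classical_set_scope.
Set Implicit Arguments. Unset Strict Implicit. Unset Printing Implicit Defensive.

Lemma nbuf_le n (s : state n) (m : 'I_n) : ~~ isbuf (s m) -> (nbuf s <= n.-1)%N.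
Proof.
move=> hm; have -> : n.-1 = #|predC1 m| by rewrite cardC1 card_ord.
apply: subset_leq_card; apply/fintype.subsetP => x; rewrite !inE.
by apply: contraTneq => ->.
Qed.

Section Upper.
Variables (R : realType) (n : nat) (fp : 'I_n -> set (R * R)) (xs xg : 'I_n -> pose R)
  (allowed : 'I_n -> 'I_n -> bool).
Hypothesis hall : forall i, allowed i i.
Hypothesis hfeas : forall i j, i != j -> ~ overlap (place (fp i) (xg i)) (place (fp j) (xg j)).

Lemma phase2 (l : seq 'I_n) (s : state n) (m : 'I_n) :
  uniq l -> m \notin l ->
  (forall x, s x = if x \in l then InBuf _ else AtGoal x) ->
  exec fp xs xg allowed s [seq Place i i | i <- l] n.-1.
Proof.
elim: l s => [|i l IH] s /= ul ml hs.
  split; last by apply: (nbuf_le (m:=m)); rewrite hs.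
  by move=> x; exists x; rewrite hs.
move: ul ml => /andP [il ul]; rewrite inE negb_or => /andP [mi ml].
split; first by apply: (nbuf_le (m:=m)); rewrite hs inE (negbTE ml) orbF (negbTE mi).
split.
  split; first by right; rewrite hs inE eqxx.
  split; first exact: hall.
  split.
    move=> k; rewrite hs; case: ifP => // hk [ek]; subst k.
    by rewrite inE eqxx in hk.
  split.
    by move=> k _; rewrite hs; case: ifP.
  move=> k j' ki; rewrite hs; case: ifP => // _ [<-].
  by apply: hfeas; rewrite eq_sym.
apply: (IH _ ul ml) => x; rewrite /upd hs inE.
case: (eqVneq x i) => [->|xi] /=; first by rewrite (negbTE il).
by [].
Qed.

Lemma phase1 (l : seq 'I_n) (s : state n) (m : 'I_n) rest :
  uniq l -> m \notin l -> ~~ isbuf (s m) -> (forall i, i \in l -> s i = AtStart _) ->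
  exec fp xs xg allowed (fun x => if x \in l then InBuf _ else s x) rest n.-1 ->
  exec fp xs xg allowed s ([seq ToBuf i | i <- l] ++ rest) n.-1.
Proof.
elim: l s => [|i l IH] s /= ul ml sm hl hex.
  by have -> : s = (fun x => if x \in [::] then InBuf n else s x) by apply: funext.
move: ul ml => /andP [il ul]; rewrite inE negb_or => /andP [mi ml].
split; first exact: (nbuf_le sm).
split; first by apply: hl; rewrite inE eqxx.
apply: (IH _ ul ml).
- by rewrite /= /upd (negbTE mi).
- move=> x xl; rewrite /= /upd; case: (eqVneq x i) => [exi|xi].
    by subst x; rewrite xl in il.
  by apply: hl; rewrite inE xl orbT.
- move: hex; congr exec; apply: funext => x; rewrite /upd inE.
  by case: (eqVneq x i) => [->|xi] /=; [case: ifP|].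
Qed.

Lemma upper (m : 'I_n) : exists p, exec fp xs xg allowed (@init_state n) p n.-1.
Proof.
set l1 := [seq x <- enum 'I_n | x != m].
have ul1 : uniq l1 by rewrite filter_uniq // enum_uniq.
have ml1 : forall x, (x \in l1) = (x != m) by move=> x; rewrite mem_filter mem_enum andbT.
exists ([seq ToBuf i | i <- l1] ++ Place m m :: [seq Place i i | i <- l1]).
apply: (phase1 (m:=m)) => //; first by rewrite ml1 eqxx.
split; first by apply: (nbuf_le (m:=m)); rewrite ml1 eqxx.
split.
  split; first by left; rewrite ml1 eqxx.
  split; first exact: hall.
  split; first by move=> k; case: ifP.
  split; last by move=> k j' _; case: ifP.
  by move=> k km; rewrite ml1 km.
apply: (phase2 (m:=m)) => //; first by rewrite ml1 eqxx.
move=> x; rewrite /= /upd ml1; case: (eqVneq x m) => [->|xm] //=.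
Qed.

End Upper.

Lemma lower (R : realType) n (fp : 'I_n -> set (R * R)) (xs xg : 'I_n -> pose R)
  allowed (i0 : 'I_n) :
  (forall i j k, k != i -> overlap (place (fp i) (xg j)) (place (fp k) (xs k))) ->
  forall p k, exec fp xs xg allowed (@init_state n) p k -> (n.-1 <= k)%N.
Proof.
move=> hov p k.
have : forall x j, @init_state n x <> AtGoal j by [].
elim: p (@init_state n) => [|a p IH] s hs /=.
  by case=> /(_ i0) [j] /hs.
case=> hk [hv hex].
case: a hv hex => [i|i j] hv hex.
  apply: IH hex => x j /=; rewrite /upd; case: (x == i) => //; exact: hs.
apply: leq_trans hk.
have -> : n.-1 = #|predC1 i| by rewrite cardC1 card_ord.
apply: subset_leq_card; apply/fintype.subsetP => x; rewrite !inE => xi.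
case: hv => _ [_ [_ [hst _]]].
case e: (s x) => [| |j'] //.
  by case: (hst x xi e); apply: hov.
by case: (hs x j').
Qed.
Section Geo.
Variable R : realType.

Definition box (c1 c2 h1 h2 : R) : set (R * R) :=
  [set v | `|v.1 - c1| <= h1 /\ `|v.2 - c2| <= h2].

Lemma interior_box c1 c2 h1 h2 (p : R * R) :
  `|p.1 - c1| < h1 -> `|p.2 - c2| < h2 -> interior (box c1 c2 h1 h2) p.
Proof.
move=> h1p h2p; rewrite /interior; apply/nbhs_ballP.
exists (Num.min (h1 - `|p.1 - c1|) (h2 - `|p.2 - c2|)).
  by rewrite /= lt_min !subr_gt0 h1p h2p.
move=> q [/= b1 b2].
move: b1 b2; rewrite -!ball_normE /= !lt_min => /andP [q1 _] /andP [_ q2].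
have a1 := lexx `|p.1 - c1|; have a2 := lexx `|p.2 - c2|.
move: a1 a2 q1 q2; set A1 := `|p.1 - c1|; set A2 := `|p.2 - c2|.
rewrite /A1 /A2 {1}ler_norml {1}ler_norml !ltr_norml.
move=> /andP [a1 a1'] /andP [a2 a2'] /andP [b1 b1'] /andP [b2 b2'].
by split; rewrite ler_norml; apply/andP; split; lra.
Qed.

Lemma place0 a b t1 t2 : place (rect a b) (Pose 0 t1 t2) = box t1 t2 (a/2) (b/2).
Proof.
apply/seteqP; split => v.
  case=> u [u1 u2] <-; rewrite /act /= cos0 sin0 !mul1r !mul0r subr0 add0r; rewrite /box /= !addrK.
  by split.
move=> [h1 h2]; exists (v.1 - t1, v.2 - t2); first by split.
rewrite /act /= cos0 sin0 !mul1r !mul0r subr0 add0r !subrK.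
by case: v {h1 h2}.
Qed.

Lemma place90 a b t1 t2 : place (rect a b) (Pose (pi/2) t1 t2) = box t1 t2 (b/2) (a/2).
Proof.
apply/seteqP; split => v.
  case=> u [u1 u2] <-; rewrite /act /= cos_pihalf sin_pihalf !mul1r !mul0r add0r addr0; rewrite /box /= !addrK.
  by rewrite normrN; split.
move=> [h1 h2]; exists (v.2 - t2, t1 - v.1).
  by split => //=; rewrite distrC.
rewrite /act /= cos_pihalf sin_pihalf !mul1r !mul0r add0r addr0.
by case: v {h1 h2} => v1 v2 /=; congr (_, _); lra.
Qed.

Lemma disj_overlap (A B : set (R * R)) : (forall v, A v -> B v -> False) -> ~ overlap A B.
Proof. by move=> h [x [/interior_subset ha /interior_subset hb]]; exact: h ha hb. Qed.

End Geo.

Lemma natr_sep (R : realType) (i j : nat) : i != j ->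
  (i%:R + 1 <= j%:R :> R) \/ (j%:R + 1 <= i%:R :> R).
Proof.
case: (ltngtP i j) => // h _; [left|right]; rewrite natr1 ler_nat //.
Qed.

Lemma ord_bound (R : realType) n (i : 'I_n) : ((i : nat)%:R + 1 <= n%:R :> R) /\ (0 <= (i : nat)%:R :> R).
Proof. by rewrite natr1 ler_nat ltn_ord ler0n. Qed.

Section Cons.
Variables (R : realType) (n : nat).

Definition aC : R := 4 * n%:R.
Definition xsC (i : 'I_n) : pose R := Pose 0 0 (2 * (i : nat)%:R).
Definition xgC (g : 'I_n -> 'I_n) (i : 'I_n) : pose R := Pose (pi/2) (2 * (g i : nat)%:R) 0.
Definition WC : set (R * R) := box 0 0 aC aC.

Lemma bounded_WC : bounded_ws WC.
Proof. by exists aC => v [h1 h2]; rewrite -(subr0 v.1) -(subr0 v.2). Qed.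

Lemma feas_s : feasible WC (fun _ => rect aC 1) xsC.
Proof.
split.
  move=> i v; rewrite place0 => -[h1 h2]; have [o1 o2] := ord_bound R i.
  move: h1 h2; rewrite /WC /box /aC /= !ler_norml => /andP [h1 h1'] /andP [h2 h2'].
  by split; apply/andP; split; lra.
move=> i j ij; apply: disj_overlap => v; rewrite !place0 => -[_ h1] [_ h2].
have := natr_sep R ij.
move: h1 h2; rewrite /= !ler_norml => /andP [h1 h1'] /andP [h2 h2'].
case; lra.
Qed.

Lemma feas_g (g : 'I_n -> 'I_n) : injective g -> feasible WC (fun _ => rect aC 1) (xgC g).
Proof.
move=> ig; split.
  move=> i v; rewrite place90 => -[h1 h2]; have [o1 o2] := ord_bound R (g i).
  move: h1 h2; rewrite /WC /box /aC /= !ler_norml => /andP [h1 h1'] /andP [h2 h2'].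
  by split; apply/andP; split; lra.
move=> i j ij; apply: disj_overlap => v; rewrite !place90 => -[h1 _] [h2 _].
have : g i != g j by rewrite (inj_eq ig).
move/(natr_sep R).
move: h1 h2; rewrite /= !ler_norml => /andP [h1 h1'] /andP [h2 h2'].
case; lra.
Qed.

Lemma ov_gs (g : 'I_n -> 'I_n) (j k : 'I_n) :
  overlap (place (rect aC 1) (xgC g j)) (place (rect aC 1) (xsC k)).
Proof.
exists (2 * (g j : nat)%:R, 2 * (k : nat)%:R).
have [o1 o2] := ord_bound R (g j); have [o3 o4] := ord_bound R k.
rewrite place0 place90; split; apply: interior_box => /=; rewrite ?subrr ?normr0 ?subr0 /aC //;
  rewrite ?ger0_norm; lra.
Qed.

End Cons.


Theorem proposition4 (R : realType) :
  (forall (n : nat) (W : set (R * R)) (fp : 'I_n -> set (R * R))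
          (xs xg : 'I_n -> pose R),
     (0 < n)%N -> labeled_instance W fp xs xg ->
     labeled_MRB_le fp xs xg n.-1) /\
  (forall (n : nat) (W : set (R * R)) (F : set (R * R))
          (xs xg : 'I_n -> pose R),
     (0 < n)%N -> unlabeled_instance W F xs xg ->
     unlabeled_MRB_le F xs xg n.-1) /\
  (forall n : nat, (0 < n)%N ->
     exists (W : set (R * R)) (a b : R) (xs xg : 'I_n -> pose R),
       0 < a /\ 0 < b /\
       unlabeled_instance W (rect a b) xs xg /\
       unlabeled_MRB_eq (rect a b) xs xg n.-1 /\
       forall sigma : {perm 'I_n},
         labeled_instance W (fun _ => rect a b) xs (fun i => xg (sigma i)) /\
         labeled_MRB_eq (fun _ => rect a b) xs (fun i => xg (sigma i)) n.-1).
Proof.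
split.
  move=> n W fp xs xg n0 [_ [_ [_ hg]]].
  by apply: (@upper R n fp xs xg (fun i j => j == i) _ hg (Ordinal n0)) => i; rewrite eqxx.
split.
  move=> n W F xs xg n0 [_ [_ [_ hg]]].
  exact: (@upper R n (fun _ => F) xs xg (fun _ _ => true) (fun _ => erefl) hg (Ordinal n0)).
move=> n n0.
exists (@WC R n), (aC R n), 1, (@xsC R n), (@xgC R n id).
have a0 : 0 < aC R n by rewrite /aC mulr_gt0 // ltr0n.
split => //; split => //.
have fs := feas_s R n; have fg := feas_g R (@inj_id 'I_n).
split; first by split; [exact: bounded_WC|split].
split.
  split; first exact: (@upper R n _ (@xsC R n) _ (fun _ _ => true) (fun _ => erefl) fg.2 (Ordinal n0)).
  by move=> k' [p hp]; apply: (lower (Ordinal n0) _ hp) => i j k _; exact: ov_gs.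
move=> sigma.
have fg' : feasible (@WC R n) (fun _ => rect (aC R n) 1) (xgC R sigma) by exact: feas_g perm_inj.
split; first by split; [exact: bounded_WC|split].
split.
  apply: (@upper R n _ (@xsC R n) _ (fun i j => j == i) _ fg'.2 (Ordinal n0)).
  by move=> i; rewrite eqxx.
by move=> k' [p hp]; apply: (lower (Ordinal n0) _ hp) => i j k _; exact: ov_gs.
Qed.
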